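(* Let ${\bf a}=(a_1,\ldots,a_q),{\bf b}\in(2\mathbb N)^q$ and let $n\ge\max(2,q+1)$ be an integer. For $s=1,\ldots,q$ let ${\bf a}^{(s)}=(a_1,\ldots,a_{s-1},a_s+2,a_{s+1},\ldots,a_q)$. Then $$\Phi_n\begin{pmatrix}{\bf a}&2\\ {\bf b}&0\end{pmatrix}=\frac{1}{n-q}\left((\Sigma a_i+n-1)\,\Phi_n\begin{pmatrix}{\bf a}\\ {\bf b}\end{pmatrix}-\sum_{s=1}^q(a_s+1)\,\Phi_n\begin{pmatrix}{\bf a}^{(s)}\\ {\bf b}\end{pmatrix}\right).$$
   Context: Double factorial convention: for an integer $m\ge0$, $m!!=(m-1)(m-3)\cdots$, the product of the positive integers $\le m-1$ of the parity of $m-1$ (empty product $=1$). For a $2\times q$ matrix with nonnegative integer entries and $n\ge\max(2,q)$, $I_n\begin{pmatrix}{\bf a}\\{\bf b}\end{pmatrix}=\int_{O_n}\prod_j u_{1j}^{a_j}u_{2j}^{b_j}\,du$ (Haar probability measure) and $\Phi_n\begin{pmatrix}{\bf a}\\ {\bf b}\end{pmatrix}=\frac{(\Sigma a_i+n-2)!!\,(\Sigma b_i+n-2)!!}{(n-2)!!^2\,\prod a_i!!\,\prod b_i!!}\,I_n\begin{pmatrix}{\bf a}\\ {\bf b}\end{pmatrix}$. *)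

(* Defs.v *)
From HB Require Import structures.
From mathcomp Require Import all_boot all_order all_algebra.
From mathcomp Require Import all_classical all_reals all_analysis.
Set Implicit Arguments. Unset Strict Implicit. Unset Printing Implicit Defensive.
Import Order.TTheory GRing.Theory Num.Theory.
Local Open Scope classical_set_scope.
Local Open Scope ring_scope.

(* Double factorial with the paper's convention:
   m!! = (m-1)(m-3)... = product of positive integers <= m-1 of the parity of m-1. *)
Fixpoint dfact (m : nat) : nat :=
  match m with
  | 0 => 1
  | 1 => 1
  | (k.+1 as m').+1 => m' * dfact k
  end%N.

(* Entry (i,j) of an n x n matrix, indices as naturals (0 outside range). *)
Definition ent {R : pzRingType} {n : nat} (M : 'M[R]_n) (i j : nat) : R :=
  match @insub nat (fun k => k < n)%N 'I_n i, @insub nat (fun k => k < n)%N 'I_n j with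
  | Some i', Some j' => M i' j'
  | _, _ => 0
  end.

(* Sigma-algebra on n x n real matrices generated by the entry maps
   (= Borel sigma-algebra of R^(n*n)). *)
Definition mxT (R : realType) (n : nat) : Type := 'M[R]_n.
HB.instance Definition _ (R : realType) (n : nat) := Choice.on (mxT R n).
HB.instance Definition _ (R : realType) (n : nat) :=
  isPointed.Build (mxT R n) (0 : 'M[R]_n).

Definition mx_entry_sets (R : realType) (n : nat) : set (set (mxT R n)) :=
  \bigcup_(ij in [set: 'I_n * 'I_n])
     preimage_set_system [set: mxT R n] (fun M : mxT R n => (M : 'M[R]_n) ij.1 ij.2)
       measurable.

Definition MxSpace (R : realType) (n : nat) := g_sigma_algebraType (@mx_entry_sets R n).

Definition orthogonal_mx {R : pzRingType} {n : nat} (M : 'M[R]_n) : bool :=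
  M *m M^T == 1%:M.

Definition is_haar_On (R : realType) (n : nat) (mu : probability (MxSpace R n) R) : Prop :=
  mu [set M : MxSpace R n | orthogonal_mx (M : 'M[R]_n)] = 1%E /\
  forall (g : 'M[R]_n), orthogonal_mx g ->
    forall A : set (MxSpace R n), measurable A ->
      mu [set M : MxSpace R n | A (g *m (M : 'M[R]_n))] = mu A.

(* I_n (a ; b) = \int_{O_n} \prod_j u_{1j}^{a_j} u_{2j}^{b_j} du  (rows 1,2 are indices 0,1). *)
Definition I_On (R : realType) (n : nat) (mu : probability (MxSpace R n) R)
    (a b : seq nat) : R :=
  Rintegral mu [set: MxSpace R n]
    (fun M : MxSpace R n => \prod_(j < size a)
        (ent (M : 'M[R]_n) 0 j ^+ nth 0%N a j * ent (M : 'M[R]_n) 1 j ^+ nth 0%N b j)).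

Definition Phi_On (R : realType) (n : nat) (mu : probability (MxSpace R n) R)
    (a b : seq nat) : R :=
  ((dfact (sumn a + n - 2))%:R * (dfact (sumn b + n - 2))%:R)
  / ((dfact (n - 2))%:R ^+ 2 * (\prod_(x <- a) (dfact x)%:R) * (\prod_(x <- b) (dfact x)%:R))
  * I_On mu a b.

(* Main.v *)
Require Import Defs.
From HB Require Import structures.
From mathcomp Require Import all_boot all_order all_algebra.
From mathcomp Require Import all_classical all_reals all_analysis.
From mathcomp Require Import measurable_realfun.
From mathcomp Require Import zify ring lra.
Import Order.TTheory GRing.Theory Num.Theory.
Local Open Scope classical_set_scope.
Local Open Scope ring_scope.
Set Implicit Arguments. Unset Strict Implicit. Unset Printing Implicit Defensive.

Section Haar.
Variables (R : realType) (n : nat).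
Local Notation T := (MxSpace R n).

Lemma mentry (i j : 'I_n) : measurable_fun setT (fun M : T => (M : 'M[R]_n) i j).
Proof.
move=> _ A mA; apply: sub_gen_smallest; exists (i, j) => //.
by exists A.
Qed.

Lemma mxmeas d (X : measurableType d) (k : X -> T) :
  (forall i j, measurable_fun setT (fun x => (k x : 'M[R]_n) i j)) ->
  measurable_fun setT k.
Proof.
move=> hk; apply: (@measurability _ _ _ T setT k (@mx_entry_sets R n)) => //.
move=> _ [B [[i j] _ [A mA <-]] <-].
rewrite setTI preimage_setI preimage_setT setTI -comp_preimage.
by rewrite -[X in measurable X]setTI; apply: hk.
Qed.

Definition mxm d (X : measurableType d) (k : X -> 'M[R]_n) :=
  forall i j, measurable_fun setT (fun x => k x i j).
Arguments mxm {d X}.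

Lemma mxm_mul d (X : measurableType d) (A B : X -> 'M[R]_n) :
  mxm A -> mxm B -> mxm (fun x => A x *m B x).
Proof.
move=> hA hB i j; under eq_fun do rewrite mxE.
by apply: measurable_sum => k; apply: measurable_realfun.measurable_funM.
Qed.

Lemma mxm_tr d (X : measurableType d) (A : X -> 'M[R]_n) :
  mxm A -> mxm (fun x => (A x)^T).
Proof.
move=> hA i j; rewrite (_ : (fun x => _) = fun x => A x j i) //.
by apply/funext => x; rewrite mxE.
Qed.

Lemma mxm_cst d (X : measurableType d) (C : 'M[R]_n) :
  mxm (fun _ : X => C).
Proof. by move=> i j; exact: measurable_cst. Qed.

Lemma mxm_id : mxm (fun M : T => (M : 'M[R]_n)).
Proof. exact: mentry. Qed.

Lemma mxm_comp d (X : measurableType d) (k : X -> T) :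
  measurable_fun setT k -> mxm (fun x => (k x : 'M[R]_n)).
Proof. by move=> mk i j; exact: (measurableT_comp (mentry i j) mk). Qed.

Definition Oset : set T := [set M : T | orthogonal_mx (M : 'M[R]_n)].

Lemma mOset : measurable Oset.
Proof.
have -> : Oset = \bigcap_(ij in [set: 'I_n * 'I_n])
    [set M : T | ((M : 'M[R]_n) *m M^T) ij.1 ij.2 = (1%:M : 'M[R]_n) ij.1 ij.2].
  apply/seteqP; split => M /=.
    by move=> /eqP HM [i j] _; have := congr1 (fun A : 'M[R]_n => A i j) HM.
  by move=> H; apply/eqP/matrixP => i j; exact: (H (i, j) I).
apply: fin_bigcap_measurable; first exact: finite_finset.
move=> -[i j] _ /=.
rewrite -[X in measurable X]setTI.
have h := mxm_mul mxm_id (mxm_tr mxm_id) i j.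
have := h measurableT _ (measurable_set1 ((1%:M : 'M[R]_n) i j)).
exact.
Qed.


Lemma mul_left (g : 'M[R]_n) : measurable_fun setT (fun M : T => (g *m M : T)).
Proof. by apply: mxmeas; exact: (mxm_mul (mxm_cst g) mxm_id). Qed.

Variable mu : probability T R.

Lemma left_inv (H : is_haar_On mu) (g : 'M[R]_n) (og : orthogonal_mx g)
  (f : T -> \bar R) : measurable_fun setT f -> (forall x, (0 <= f x)%E) ->
  (\int[mu]_x f (g *m x : T) = \int[mu]_x f x)%E.
Proof.
move=> mf f0.
have E := ge0_integral_pushforward (mul_left g) mu
  measurableT mf (fun y _ => f0 y).
rewrite preimage_setT in E.
transitivity (\int[mu]_x (f \o (fun M : T => (g *m M : T))) x)%E => //.
rewrite -E; apply: eq_measure_integral; first exact: mul_left.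
move=> ? A mA _ /=.
by rewrite /pushforward; apply: (H.2 g og A mA).
Qed.


Lemma muT : mu setT = 1%E.
Proof. exact: probability_setT. Qed.

Lemma intc (c : \bar R) : (\int[mu]_x c = c)%E.
Proof.
rewrite (integral_cst mu measurableT c).
rewrite -[RHS]mule1; congr (_ * _)%E.
exact: probability_setT.
Qed.

Lemma muO (H : is_haar_On mu) : mu Oset = 1%E.
Proof. exact: H.1. Qed.

Lemma ae_O (H : is_haar_On mu) (f g : T -> \bar R) : measurable_fun setT f -> measurable_fun setT g ->
  (forall x, Oset x -> f x = g x) -> (\int[mu]_x f x = \int[mu]_x g x)%E.
Proof.
move=> mf mg fg; apply: ae_eq_integral => //.
exists (~` Oset); split.
- exact: measurableC mOset.
- have h := @probability_setC _ _ _ mu _ mOset.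
  by rewrite (muO H) subee in h.
- by move=> x Hx Ox; apply: Hx => _; exact: fg.
Qed.

Lemma orth_tr (g : 'M[R]_n) : orthogonal_mx g -> orthogonal_mx g^T.
Proof. by rewrite /orthogonal_mx trmxK => /eqP h; apply/eqP; exact: mulmx1C. Qed.

Lemma tr_meas : measurable_fun setT (fun M : T => ((M : 'M[R]_n)^T : T)).
Proof. by apply: mxmeas; exact: (mxm_tr mxm_id). Qed.

Lemma tr_inv (H : is_haar_On mu) (f : T -> \bar R) : measurable_fun setT f ->
  (forall x, (0 <= f x)%E) ->
  (\int[mu]_x f x = \int[mu]_x f ((x : 'M[R]_n)^T : T))%E.
Proof.
move=> mf f0.
pose K := fun p : T * T => f (((p.1 : 'M[R]_n)^T *m p.2 : 'M[R]_n) : T).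
have mK : measurable_fun setT K.
  apply: (measurableT_comp mf); apply: mxmeas; apply: mxm_mul.
    by apply: mxm_tr; exact: (mxm_comp measurable_fst).
  exact: (mxm_comp measurable_snd).
have K0 : forall p, (0 <= K p)%E by move=> p; exact: f0.
have E := fubini_tonelli K mK K0.
have L : (\int[mu]_x \int[mu]_y K (x, y) = \int[mu]_x f x)%E.
  transitivity (\int[mu]_x (\int[mu]_y f y))%E.
    apply: (ae_O H); first exact: (measurable_fun_fubini_tonelli_F K mK K0).
      exact: measurable_cst.
    move=> x Ox; rewrite /K /=.
    exact: (left_inv H (orth_tr Ox) mf f0).
  by rewrite intc.
have Rr : (\int[mu]_y \int[mu]_x K (x, y) = \int[mu]_y f ((y : 'M[R]_n)^T : T))%E.
  transitivity (\int[mu]_y (\int[mu]_x f ((x : 'M[R]_n)^T : T)))%E.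
    apply: (ae_O H); first exact: (measurable_fun_fubini_tonelli_G K mK K0).
      exact: measurable_cst.
    move=> y Oy; rewrite /K /=.
    transitivity (\int[mu]_x (fun X : T => f ((X : 'M[R]_n)^T : T))
       ((y : 'M[R]_n)^T *m x : T))%E.
      by apply: eq_integral => x _ /=; rewrite trmx_mul trmxK.
    apply: (left_inv H (orth_tr Oy)) => //.
    exact: (measurableT_comp mf tr_meas).
  by rewrite intc.
by rewrite -L E Rr.
Qed.

Lemma right_inv (H : is_haar_On mu) (h : 'M[R]_n) (oh : orthogonal_mx h)
  (f : T -> \bar R) : measurable_fun setT f -> (forall x, (0 <= f x)%E) ->
  (\int[mu]_x f ((x : 'M[R]_n) *m h : T) = \int[mu]_x f x)%E.
Proof.
move=> mf f0.
have mfh : measurable_fun setT (fun x : T => f ((x : 'M[R]_n) *m h : T)).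
  apply: (measurableT_comp mf); apply: mxmeas.
  exact: (mxm_mul mxm_id (mxm_cst h)).
rewrite (tr_inv H mfh (fun x => f0 _)).
transitivity (\int[mu]_x (fun Y : T => f ((Y : 'M[R]_n)^T : T))
   (h^T *m (x : 'M[R]_n) : T))%E.
  by apply: eq_integral => x _ /=; rewrite trmx_mul trmxK.
rewrite [RHS](tr_inv H mf f0).
exact: (left_inv H (orth_tr oh) (measurableT_comp mf tr_meas) (fun x => f0 _)).
Qed.

Lemma entE (M : 'M[R]_n) (i j : 'I_n) : ent M i j = M i j.
Proof. by rewrite /ent !valK. Qed.

Lemma ent_out (M : 'M[R]_n) (i j : nat) : (n <= j)%N -> ent M i j = 0.
Proof.
move=> nj; rewrite /ent; case: (insub i) => // i'.
by rewrite insubF // ltnNge nj.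
Qed.

Lemma ment (i j : nat) : measurable_fun setT (fun M : T => ent (M : 'M[R]_n) i j).
Proof.
rewrite /ent; case: (insub i) => [i'|]; last exact: measurable_cst.
case: (insub j) => [j'|]; last exact: measurable_cst.
exact: mentry.
Qed.

Lemma orth_tperm (k1 k2 : 'I_n) : orthogonal_mx (tperm_mx k1 k2 : 'M[R]_n).
Proof.
apply/eqP; rewrite tr_tperm_mx /tperm_mx -perm_mxM.
by rewrite perm.tperm2 perm_mx1.
Qed.

Lemma ent_tperm (M : 'M[R]_n) (k1 k2 : 'I_n) (i j : nat) :
  ent (M *m tperm_mx k1 k2) i j =
  ent M i (if j == nat_of_ord k1 then nat_of_ord k2 else if j == nat_of_ord k2 then nat_of_ord k1 else j).
Proof.
have [jn|nj] := ltnP j n; last first.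
  have -> : (j == k1) = false by apply/negbTE; apply/eqP => jk; move: nj; rewrite jk leqNgt ltn_ord.
  have -> : (j == k2) = false by apply/negbTE; apply/eqP => jk; move: nj; rewrite jk leqNgt ltn_ord.
  by rewrite !ent_out.
rewrite -xcolE.
have [i_n|ni] := ltnP i n; last first.
  by rewrite /ent insubF ?ltnNge ?ni.
pose i' := Ordinal i_n; pose j' := Ordinal jn.
have -> : i = i' by [].
rewrite (_ : j = j') // entE mxE.
case: eqP => [jk1|jnk1].
  have -> : j' = k1 by apply: val_inj.
  by rewrite perm.tpermL entE.
case: eqP => [jk2|jnk2].
  have -> : j' = k2 by apply: val_inj.
  by rewrite perm.tpermR entE.
rewrite perm.tpermD ?entE //; apply/eqP => /(congr1 val) /=; [exact: nesym jnk1|exact: nesym jnk2].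
Qed.

Lemma rowsum (M : 'M[R]_n) (i : 'I_n) : orthogonal_mx M ->
  \sum_(0 <= k < n) ent M i k ^+ 2 = 1.
Proof.
move=> /eqP oM.
have E : (M *m M^T) i i = 1 by rewrite oM mxE eqxx.
rewrite mxE in E; rewrite -E big_mkord; apply: eq_bigr => k _.
by rewrite mxE entE expr2.
Qed.

Lemma ent_le1 (M : 'M[R]_n) (i j : nat) : orthogonal_mx M -> `|ent M i j| <= 1.
Proof.
move=> oM; have [jn|nj] := ltnP j n; last by rewrite ent_out // normr0.
have [i_n|ni] := ltnP i n; last first.
  by rewrite /ent insubF ?normr0 // ltnNge ni.
pose i' := Ordinal i_n; pose j' := Ordinal jn.
have : ent M i j ^+ 2 <= 1.
  rewrite -(rowsum i' oM) (big_cat_nat (leq0n j) (ltnW jn)) /=.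
  rewrite [X in _ + X]big_ltn //= addrCA lerDl.
  by rewrite addr_ge0 // sumr_ge0 // => k _; exact: sqr_ge0.
by rewrite -real_normK ?num_real // expr_le1.
Qed.

Lemma aeO (H : is_haar_On mu) (Pr : T -> Prop) :
  (forall x, Oset x -> Pr x) -> {ae mu, forall x, Pr x}.
Proof.
move=> h; exists (~` Oset); split.
- exact: measurableC mOset.
- have hh := @probability_setC _ _ _ mu _ mOset.
  by rewrite (muO H) subee in hh.
- by move=> x /= nP Ox; apply: nP; exact: h.
Qed.

Lemma fin_int (H : is_haar_On mu) (f : T -> R) : measurable_fun setT f ->
  (forall x, 0 <= f x) -> (forall x, Oset x -> f x <= 1) ->
  (\int[mu]_x (f x)%:E)%E \is a fin_num.
Proof.
move=> mf f0 f1; rewrite ge0_fin_numE; last first.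
  by apply: integral_ge0 => x _; rewrite lee_fin.
apply: (@le_lt_trans _ _ (\int[mu]_x (cst 1%E x))%E).
  apply: ae_ge0_le_integral => //.
  all: try (by move=> x _; rewrite lee_fin).
  all: try (exact/measurable_EFinP).
  by apply: aeO => // x Ox _; rewrite lee_fin; exact: f1.
by rewrite intc ltry.
Qed.

End Haar.

Lemma dfact_gt0 m : (0 < dfact m)%N.
Proof.
suff : (0 < dfact m)%N /\ (0 < dfact m.+1)%N by case.
elim: m => [|m [h1 h2]]; first by [].
by split => //=; rewrite muln_gt0.
Qed.

Lemma sumn_set_nth (a : seq nat) s : (s < size a)%N ->
  sumn (set_nth 0%N a s (nth 0%N a s + 2)%N) = (sumn a + 2)%N.
Proof.
elim: a s => [|x a IH] [|s] //= hs; first by rewrite addnAC.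
by rewrite IH // addnA.
Qed.

Lemma prod_set_nth (R : realType) (a : seq nat) s : (s < size a)%N ->
  \prod_(x <- set_nth 0%N a s (nth 0%N a s + 2)%N) ((dfact x)%:R : R) =
  (\prod_(x <- a) (dfact x)%:R) * (nth 0%N a s).+1%:R.
Proof.
elim: a s => [|x a IH] [|s] //= hs; rewrite !big_cons.
  rewrite addn2 /= natrM; ring.
by rewrite IH // mulrA.
Qed.


Theorem lemma4p1 (R : realType) (n : nat) (mu : probability (MxSpace R n) R)
    (a b : seq nat) :
  size b = size a ->
  all (fun x => ~~ odd x) a -> all (fun x => ~~ odd x) b ->
  (maxn 2 (size a).+1 <= n)%N ->
  is_haar_On mu ->
  Phi_On mu (rcons a 2%N) (rcons b 0%N) =
    (n - size a)%:R^-1 *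
      ((sumn a + n - 1)%:R * Phi_On mu a b
       - \sum_(s < size a)
           (nth 0%N a s + 1)%N%:R * Phi_On mu (set_nth 0%N a s (nth 0%N a s + 2)%N) b).
Proof.
move=> sb ea eb hn H.
have n2 : (2 <= n)%N by move: hn; rewrite geq_max => /andP[].
have qn : (size a < n)%N by move: hn; rewrite geq_max => /andP[].
have n0 : (0 < n)%N by apply: leq_trans n2.
pose i0 : 'I_n := Ordinal n0.
set q := size a in sb qn *.
pose F (M : 'M[R]_n) (j : nat) := ent M 0 j ^+ nth 0%N a j * ent M 1 j ^+ nth 0%N b j.
pose P (M : MxSpace R n) := \prod_(j < q) F M j.
pose e (M : MxSpace R n) (k : nat) := ent (M : 'M[R]_n) 0 k ^+ 2.
pose J k := (\int[mu]_M ((P M * e M k)%:E))%E.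
pose J0 := (\int[mu]_M ((P M)%:E))%E.
have evA j : ~~ odd (nth 0%N a j).
  by case: (ltnP j q) => jq; [exact: (all_nthP 0%N ea) | rewrite nth_default].
have evB j : ~~ odd (nth 0%N b j).
  by case: (ltnP j q) => jq; [apply: (all_nthP 0%N eb); rewrite sb | rewrite nth_default ?sb].
have F0 M j : 0 <= F M j by rewrite mulr_ge0 // exprn_even_ge0.
have P0 M : 0 <= P M by apply: prodr_ge0 => j _.
have e0 M k : 0 <= e M k by exact: sqr_ge0.
have mP : measurable_fun setT P.
  apply: measurable_prod => j _.
  by apply: measurable_funM; apply: measurable_funX; exact: ment.
have me k : measurable_fun setT (e ^~ k) by apply: measurable_funX; exact: ment.
have F1 M j : @Oset R n M -> F M j <= 1.
  move=> OM; apply: mulr_ile1; rewrite ?exprn_even_ge0 //.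
    by rewrite (le_trans (ler_norm _)) // normrX exprn_ile1 // ent_le1.
  by rewrite (le_trans (ler_norm _)) // normrX exprn_ile1 // ent_le1.
have P1 M : @Oset R n M -> P M <= 1.
  move=> OM; have : 0 <= P M <= 1.
    apply: (big_ind (fun x => 0 <= x <= 1)); first by rewrite ler01 lexx.
      move=> x y /andP[x0 x1] /andP[y0 y1]; rewrite mulr_ge0 //.
      exact: mulr_ile1.
    by move=> j _; rewrite F0 F1.
  by case/andP.
have e1 M k : @Oset R n M -> e M k <= 1.
  move=> OM; rewrite /e -real_normK ?num_real //.
  by rewrite exprn_ile1 // ent_le1.
have J0fin : J0 \is a fin_num by apply: fin_int.
have Jfin k : J k \is a fin_num.
  apply: fin_int => //; first exact: measurable_funM.
    by move=> M; rewrite mulr_ge0.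
  by move=> M OM; apply: mulr_ile1; [exact: P0|exact: e0|exact: P1|exact: e1].
have IB : I_On mu a b = fine J0 by [].
have IA : I_On mu (rcons a 2%N) (rcons b 0%N) = fine (J q).
  rewrite /I_On /Rintegral; congr fine; apply: eq_integral => M _; congr EFin.
  rewrite size_rcons big_ord_recr /= !nth_rcons sb ltnn eqxx expr0 mulr1.
  rewrite /P /e; congr (_ * _); apply: eq_bigr => j _.
  by rewrite /F !nth_rcons sb ltn_ord.
have IC (s : 'I_q) : I_On mu (set_nth 0%N a s (nth 0%N a s + 2)%N) b = fine (J s).
  rewrite /I_On /Rintegral; congr fine; apply: eq_integral => M _; congr EFin.
  rewrite size_set_nth (maxn_idPr (ltn_ord s)).
  rewrite /P (bigD1 s) //= [in RHS](bigD1 s) //= nth_set_nth /= eqxx.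
  rewrite (eq_bigr (fun j : 'I_q => F M j)); last first.
    move=> j js; rewrite /F nth_set_nth /=.
    by rewrite (negbTE (js : (j : nat) != s)).
  rewrite /F /e exprD; ring.
have sumJ : J0 = (\sum_(0 <= k < n) J k)%E.
  rewrite /J0 (@ae_O R n mu H _ (fun M => (\sum_(0 <= k < n) P M * e M k)%:E)).
  - under eq_integral do rewrite -sumEFin.
    rewrite ge0_integral_sum //.
      by move=> k; apply/measurable_EFinP; exact: measurable_funM.
    by move=> k M _; rewrite lee_fin mulr_ge0.
  - exact/measurable_EFinP.
  - by apply/measurable_EFinP; apply: measurable_sum => k; exact: measurable_funM.
  - move=> M OM; congr EFin; rewrite -mulr_sumr.
    by rewrite (_ : \sum_(0 <= k < n) e M k = 1) ?mulr1 //; exact: (rowsum i0 OM).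
have swap k : (q <= k < n)%N -> J k = J q.
  case/andP => qk kn.
  pose kk : 'I_n := Ordinal kn; pose qq : 'I_n := Ordinal qn.
  have mf : measurable_fun setT (fun M => (P M * e M q)%:E).
    by apply/measurable_EFinP; exact: measurable_funM.
  have E := right_inv H (@orth_tperm R n qq kk) mf (fun M => mulr_ge0 (P0 M) (e0 M q)).
  rewrite /J -E; apply: eq_integral => M _; congr EFin.
  rewrite /P /e ent_tperm /= eqxx; congr (_ * _); apply: eq_bigr => j _.
  rewrite /F !ent_tperm /= (ltn_eqF (ltn_ord j)).
  by rewrite (ltn_eqF (leq_trans (ltn_ord j) qk)).
have rel : J0 = (\sum_(0 <= k < q) J k + J q *+ (n - q))%E.
  by rewrite sumJ (big_cat_nat (leq0n q) (ltnW qn)) /= (eq_big_nat _ _ swap) sumr_const_nat.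
have relR : fine J0 = \sum_(0 <= k < q) fine (J k) + fine (J q) *+ (n - q).
  apply: EFin_inj; rewrite EFinD EFin_natmul -sumEFin (fineK J0fin) rel.
  congr (_ + _)%E; last by rewrite fineK.
  by apply: eq_bigr => k _; rewrite fineK.
set Sa := sumn a.
have dA : dfact (Sa + 2 + n - 2) = ((Sa + n - 1) * dfact (Sa + n - 2))%N.
  have -> : (Sa + 2 + n - 2 = (Sa + n - 2).+2)%N by lia.
  have -> : (Sa + n - 1 = (Sa + n - 2).+1)%N by lia.
  by [].
have Dn0 m : (dfact m)%:R != 0 :> R by rewrite pnatr_eq0 -lt0n dfact_gt0.
have Pn0 (s : seq nat) : \prod_(x <- s) (dfact x)%:R != 0 :> R.
  by rewrite prodf_seq_neq0; apply/allP => x _; exact: Dn0.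
rewrite /Phi_On IA IB.
set K := (dfact (Sa + n - 2))%:R * (dfact (sumn b + n - 2))%:R /
  ((dfact (n - 2))%:R ^+ 2 * \prod_(x <- a) (dfact x)%:R * \prod_(x <- b) (dfact x)%:R) : R.
rewrite (eq_bigr (fun s : 'I_q => (Sa + n - 1)%:R * K * fine (J s))); last first.
  move=> s _; rewrite IC sumn_set_nth // prod_set_nth // dA natrM addn1 /K.
  field.
  by rewrite Pn0 Pn0 Dn0 addrC natr1 pnatr_eq0.
rewrite -mulr_sumr -(big_mkord xpredT (fun k => fine (J k))) relR -mulr_natr.
rewrite !sumn_rcons -/Sa (_ : (sumn b + 0 = sumn b)%N) ?addn0 // !big_rcons /= dA natrM /K -mulr_natr.
field.
by rewrite Pn0 Pn0 Dn0 pnatr_eq0 subn_eq0 -ltnNge qn.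
Qed.
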